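(* Let $f,g:\mathbb{R}^n\to\mathbb{R}\cup\{+\infty\}$ be two functions with nonempty convex domains and $S,R:\mathbb{R}^n\to\mathbb{R}\cup\{\pm\infty\}$ be even functions. (i) If $f$ is directionally $S$-smooth, then its Legendre transform $f^*$ is directionally $S^*$-convex. (ii) If $g$ is directionally $R$-convex, then $g^*$ is directionally $R^*$-smooth.
   Context: A function $h$ with convex domain is directionally $S$-smooth if $h((1-t)x_0+tx_1)+t(1-t)S(x_1-x_0)\ge(1-t)h(x_0)+th(x_1)$ for all $t\in(0,1)$ and all $x_0,x_1\in\mathbb{R}^n$ with $(1-t)x_0+tx_1\in\mathrm{dom}\,h$; it is directionally $R$-convex if $h((1-t)x_0+tx_1)+t(1-t)R(x_1-x_0)\le(1-t)h(x_0)+th(x_1)$ for all $t\in(0,1)$ and all $x_0,x_1\in\mathrm{dom}\,h$. Legendre transforms: $f^*(y)=\sup_x\{\langle x,y\rangle-f(x)\}$, $S^*(v)=\sup_u\{\langle u,v\rangle-S(u)\}$. *)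

(* Defs.v *)
From HB Require Import structures.
From mathcomp Require Import all_boot all_order all_algebra.
From mathcomp Require Import all_classical all_reals.
From mathcomp Require Import ereal.
Set Implicit Arguments. Unset Strict Implicit. Unset Printing Implicit Defensive.
Import Order.TTheory GRing.Theory Num.Theory.
Local Open Scope classical_set_scope.
Local Open Scope ring_scope.

Definition dotp (R : realType) (n : nat) (x y : 'rV[R]_n) : R :=
  \sum_(i < n) x ord0 i * y ord0 i.

Definition dom (R : realType) (n : nat) (h : 'rV[R]_n -> \bar R) : set 'rV[R]_n :=
  [set x | (h x < +oo)%E].

Definition convex_dom (R : realType) (n : nat) (A : set 'rV[R]_n) : Prop :=
  forall (x y : 'rV[R]_n) (t : R), A x -> A y -> 0 < t < 1 ->
    A ((1 - t) *: x + t *: y).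

Definition even_fun (R : realType) (n : nat) (S : 'rV[R]_n -> \bar R) : Prop :=
  forall u, S (- u) = S u.

Definition legendre (R : realType) (n : nat) (f : 'rV[R]_n -> \bar R)
  : 'rV[R]_n -> \bar R :=
  fun y => ereal_sup [set ((dotp x y)%:E - f x)%E | x in [set: 'rV[R]_n]].

Definition cmb (R : realType) (n : nat) (t : R) (x0 x1 : 'rV[R]_n) : 'rV[R]_n :=
  (1 - t) *: x0 + t *: x1.

Definition dir_smooth (R : realType) (n : nat) (S h : 'rV[R]_n -> \bar R) : Prop :=
  forall (t : R) (x0 x1 : 'rV[R]_n), 0 < t < 1 ->
    dom h (cmb t x0 x1) ->
    ((1 - t)%R%:E * h x0 + t%:E * h x1 <=
       h (cmb t x0 x1) + (t * (1 - t))%R%:E * S (x1 - x0)%R)%E.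

Definition dir_convex (R : realType) (n : nat) (Q h : 'rV[R]_n -> \bar R) : Prop :=
  forall (t : R) (x0 x1 : 'rV[R]_n), 0 < t < 1 ->
    dom h x0 -> dom h x1 ->
    (h (cmb t x0 x1) + (t * (1 - t))%R%:E * Q (x1 - x0)%R <=
       (1 - t)%R%:E * h x0 + t%:E * h x1)%E.

(* Main.v *)
Require Import Defs.
From HB Require Import structures.
From mathcomp Require Import all_boot all_order all_algebra.
From mathcomp Require Import all_classical all_reals.
From mathcomp Require Import ereal.
From mathcomp Require Import lra ring.
Import Order.TTheory GRing.Theory Num.Theory.
Local Open Scope classical_set_scope.
Local Open Scope ring_scope.
Lemma pmul_gtNy (R : realType) (a : R) (x : \bar R) :
  0 < a -> (-oo < x)%E -> (-oo < a%:E * x)%E.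
Proof.
move=> a0; case: x => [x| |] //= _; first by rewrite -EFinM ltNyr.
by rewrite gt0_muley ?lte_fin.
Qed.

Lemma sup_comb (R : realType) (A B : set (\bar R)) (a b r : R) :
  0 < a -> 0 < b ->
  (forall p q, A p -> B q -> (a%:E * p + b%:E * q <= r%:E)%E) ->
  (a%:E * ereal_sup A + b%:E * ereal_sup B <= r%:E)%E.
Proof.
move=> a0 b0 H.
have [->|sAn] := eqVneq (ereal_sup A) -oo%E.
  by rewrite gt0_muleNy ?lte_fin // addNye leNye.
have [->|sBn] := eqVneq (ereal_sup B) -oo%E.
  by rewrite gt0_muleNy ?lte_fin // addeNy leNye.
have [p0 Ap0 p0gt] : exists2 p, A p & (-oo < p)%E by apply: ereal_sup_gt; rewrite ltNye.
have [q0 Bq0 q0gt] : exists2 q, B q & (-oo < q)%E by apply: ereal_sup_gt; rewrite ltNye.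
have Afin : forall p, A p -> p != +oo%E.
  move=> p Ap; apply/negP => /eqP pe; have := H _ _ Ap Bq0.
  rewrite pe gt0_muley ?lte_fin // addye ?leye_eq //.
  by rewrite -ltNye pmul_gtNy.
have Bfin : forall q, B q -> q != +oo%E.
  move=> q Bq; apply/negP => /eqP qe; have := H _ _ Ap0 Bq.
  rewrite qe (gt0_muley (x:=b%:E)) ?lte_fin // addeC addye ?leye_eq //.
  by rewrite -ltNye pmul_gtNy.
have Bq0n := Bfin _ Bq0; move: Bq0n q0gt Bq0; case: q0 => [q0| |] //= _ _ Bq0.
have supAq : forall q, B q%:E -> (ereal_sup A <= ((r - b * q) / a)%:E)%E.
  move=> q Bq; apply: ge_ereal_sup => p Ap; move: (Afin _ Ap) (H _ _ Ap Bq).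
  case: p Ap => [p| |] //= Ap _; last by rewrite leNye.
  rewrite -!EFinM -EFinD !(@lee_fin R) => hp.
  by rewrite ler_pdivlMr //; lra.
have supA := supAq _ Bq0.
have Ap0n := Afin _ Ap0; move: Ap0n p0gt supA Ap0; case: p0 => [p0| |] //= _ _ supA Ap0.
have : (p0%:E <= ereal_sup A)%E by apply: ereal_sup_ubound.
move: sAn supA supAq; case: (ereal_sup A) => [s| |] //= _ supA supAq _.
have supB : (ereal_sup B <= ((r - a * s) / b)%:E)%E.
  apply: ge_ereal_sup => q Bq; move: (Bfin _ Bq) (H _ _ Ap0 Bq).
  case: q Bq => [q| |] //= Bq _; last by rewrite leNye.
  rewrite -!EFinM -EFinD !(@lee_fin R) => hq.
  have : s <= (r - b * q) / a.
    by rewrite -(@lee_fin R); apply: supAq.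
  by rewrite ler_pdivlMr // ler_pdivlMr //; lra.
have : (q0%:E <= ereal_sup B)%E by apply: ereal_sup_ubound.
move: sBn supB; case: (ereal_sup B) => [w| |] //= _ supB _.
rewrite -!EFinM -EFinD (@lee_fin R); move: supB; rewrite (@lee_fin R) ler_pdivlMr //; lra.
Qed.
Lemma fin_ex (R : realType) (x : \bar R) : (-oo < x)%E -> (x < +oo)%E -> exists r, x = r%:E.
Proof. by case: x => [r| |] // _ _; exists r. Qed.

Lemma leg_gt (R : realType) n (f : 'rV[R]_n -> \bar R) xf y :
  (forall x, f x != -oo%E) -> dom f xf -> (-oo < legendre f y)%E.
Proof.
move=> fN; rewrite /dom /=; have := fN xf.
case E: (f xf) => [a| |] // _ _.
have h : ((dotp xf y)%:E - f xf <= legendre f y)%E by apply: ereal_sup_ubound; exists xf.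
by apply: lt_le_trans h; rewrite E -EFinB ltNyr.
Qed.

Lemma ident1 (R : realType) n (t : R) (x u y0 y1 : 'rV[R]_n) :
  (1 - t) * dotp (x - t *: u) y0 + t * dotp (x + (1 - t) *: u) y1 =
  dotp x (cmb t y0 y1) + t * (1 - t) * dotp u (y1 - y0).
Proof.
rewrite /dotp !mulr_sumr -!big_split /=; apply: eq_bigr => i _; rewrite !mxE; ring.
Qed.

Lemma ident2 (R : realType) n (t : R) (x0 x1 y0 y1 : 'rV[R]_n) :
  (1 - t) * dotp x0 y0 + t * dotp x1 y1 =
  dotp (cmb t x0 x1) (cmb t y0 y1) + t * (1 - t) * dotp (x1 - x0) (y1 - y0).
Proof.
rewrite /dotp !mulr_sumr -!big_split /=; apply: eq_bigr => i _; rewrite !mxE; ring.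
Qed.

Lemma cmb1 (R : realType) n (t : R) (x u : 'rV[R]_n) :
  cmb t (x - t *: u) (x + (1 - t) *: u) = x.
Proof. apply/rowP => i; rewrite !mxE; ring. Qed.

Lemma cmb2 (R : realType) n (t : R) (x u : 'rV[R]_n) :
  (x + (1 - t) *: u) - (x - t *: u) = u.
Proof. apply/rowP => i; rewrite !mxE; ring. Qed.

Lemma cmb3 (R : realType) n (t : R) (x : 'rV[R]_n) : cmb t x x = x.
Proof. apply/rowP => i; rewrite !mxE; ring. Qed.

Ltac simp_e := repeat (first [rewrite gt0_muley; [|by rewrite lte_fin] | rewrite gt0_muleNy; [|by rewrite lte_fin] | rewrite addeNy | rewrite addNye | rewrite addye; [|by []] | rewrite addey; [|by []] | rewrite -EFinM | rewrite -EFinD]); rewrite ?leNye ?leey ?leye_eq ?leeNy_eq //.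

Theorem proposition2p9 (R : realType) (n : nat)
  (f g : 'rV[R]_n -> \bar R) (S Q : 'rV[R]_n -> \bar R) :
  (forall x, f x != -oo%E) -> (forall x, g x != -oo%E) ->
  dom f !=set0 -> convex_dom (dom f) ->
  dom g !=set0 -> convex_dom (dom g) ->
  even_fun S -> even_fun Q ->
  (dir_smooth S f -> dir_convex (legendre S) (legendre f)) /\
  (dir_convex Q g -> dir_smooth (legendre Q) (legendre g)).
Proof.
move=> fN gN [xf dxf] cf [xg dxg] cg eS eQ; split.
- move=> sm t y0 y1 /andP[t0 t1] dy0 dy1.
  have t1' : 0 < 1 - t by rewrite subr_gt0.
  have c0 : 0 < t * (1 - t) by rewrite mulr_gt0.
  have [F0 eF0] := @fin_ex R _ (@leg_gt R n f xf y0 fN dxf) dy0.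
  have [F1 eF1] := @fin_ex R _ (@leg_gt R n f xf y1 fN dxf) dy1.
  rewrite eF0 eF1 -!EFinM -EFinD -[X in (X + _ <= _)%E]mul1e.
  apply: sup_comb => //.
  move=> p q [x _ <-] [u _ <-].
  rewrite mul1e.
  have fxN := fN x.
  case Efx: (f x) fxN => [fx| |] // _; last first.
    by rewrite /= addeNy addNye leNye.
  have hs := sm t (x - t *: u)%R (x + (1 - t) *: u)%R.
  have dx : dom f x by rewrite /dom /= Efx ltry.
  rewrite cmb1 cmb2 t0 t1 in hs.
  have := hs isT dx => {}hs; rewrite Efx in hs.
  have h0 : ((dotp (x - t *: u)%R y0)%:E - f (x - t *: u)%R <= F0%:E)%E.
    by rewrite -eF0; apply: ereal_sup_ubound; exists (x - t *: u)%R.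
  have h1 : ((dotp (x + (1 - t) *: u)%R y1)%:E - f (x + (1 - t) *: u)%R <= F1%:E)%E.
    by rewrite -eF1; apply: ereal_sup_ubound; exists (x + (1 - t) *: u)%R.
  have := fN (x - t *: u)%R; have := fN (x + (1 - t) *: u)%R.
  move: hs h0 h1.
  case: (f (x - t *: u)%R) => [a0| |]; case: (f (x + (1 - t) *: u)%R) => [a1| |];
    case: (S u) => [s| |] //=.
  2-12: by move=> hs *; move: hs; simp_e.
  move=> hs h0' h1' _ _; move: hs h0' h1'.
  rewrite -!EFinM -!EFinD !(@lee_fin R) => hs h0' h1'.
  have e := @ident1 R n t x u y0 y1.
  have h0'' := ler_wpM2l (ltW t1') h0'.
  have h1'' := ler_wpM2l (ltW t0) h1'.
  nra.
- move=> dc t y0 y1 /andP[t0 t1] dyt.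
  have t1' : 0 < 1 - t by rewrite subr_gt0.
  have c0 : 0 < t * (1 - t) by rewrite mulr_gt0.
  have [G eG] := @fin_ex R _ (@leg_gt R n g xg (cmb t y0 y1) gN dxg) dyt.
  have dcg := dc t xg xg (introT andP (conj t0 t1)) dxg dxg.
  rewrite cmb3 subrr in dcg.
  have Q0 : Q 0 != +oo%E.
    move: dcg (gN xg) dxg; rewrite /dom /=; case: (g xg) => [a| |] //;
      case: (Q 0) => [q| |] //= h _ _; move: h; simp_e.
  have hQ0 : ((dotp 0%R (y1 - y0))%:E - Q 0%R <= legendre Q (y1 - y0))%E.
    by apply: ereal_sup_ubound; exists 0%R.
  have QsgtNy : (-oo < legendre Q (y1 - y0))%E.
    apply: lt_le_trans hQ0; move: Q0; case: (Q 0%R) => [q| |] //= _.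
    by rewrite -EFinD ltNyr.
  case EQs: (legendre Q (y1 - y0)) QsgtNy => [qs| |] // _; last first.
    by rewrite eG gt0_muley ?lte_fin // addey // leey.
  rewrite eG -EFinM -EFinD.
  apply: sup_comb => //.
  move=> p q [x0 _ <-] [x1 _ <-].
  case Eg0: (g x0) (gN x0) => [a0| |] // _ /=; last by simp_e.
  case Eg1: (g x1) (gN x1) => [a1| |] // _ /=; last by simp_e.
  have d0 : dom g x0 by rewrite /dom /= Eg0 ltry.
  have d1 : dom g x1 by rewrite /dom /= Eg1 ltry.
  have hd := dc t x0 x1 (introT andP (conj t0 t1)) d0 d1.
  rewrite Eg0 Eg1 in hd.
  have hq : ((dotp (x1 - x0) (y1 - y0))%:E - Q (x1 - x0)%R <= qs%:E)%E.
    by rewrite -EQs; apply: ereal_sup_ubound; exists (x1 - x0)%R.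
  have hG : ((dotp (cmb t x0 x1) (cmb t y0 y1))%:E - g (cmb t x0 x1) <= G%:E)%E.
    by rewrite -eG; apply: ereal_sup_ubound; exists (cmb t x0 x1).
  move: hd hq hG (gN (cmb t x0 x1)).
  case: (g (cmb t x0 x1)) => [gt| |]; case: (Q (x1 - x0)%R) => [qu| |] //=.
  2-3: by move=> hs *; move: hs; simp_e.
  rewrite -!EFinM -!EFinD !(@lee_fin R) => hd hq hG _.
  have e := @ident2 R n t x0 x1 y0 y1.
  have hq' := ler_wpM2l (ltW c0) hq.
  nra.
Qed.
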